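(* Let $K\subset\mathbb{R}^n$ be a closed convex set. For every $\varepsilon\ge0$, the map $\nu\mapsto w_\nu(\varepsilon)$ is concave on $K$.
   Context: $w_\nu(\varepsilon)=\mathbb{E}\sup_{t\in B(\nu,\varepsilon)\cap K}\langle x,t\rangle$ with $x\sim N(0,\mathbb{I}_n)$ and $B(\nu,\varepsilon)$ the closed Euclidean ball of radius $\varepsilon$ around $\nu$. *)

(* Defs.v *)
From HB Require Import structures.
From mathcomp Require Import all_boot all_order all_algebra.
From mathcomp Require Import all_classical all_reals all_analysis.
Set Implicit Arguments. Unset Strict Implicit. Unset Printing Implicit Defensive.
Import Order.TTheory GRing.Theory Num.Theory.
Import numFieldNormedType.Exports.
Local Open Scope classical_set_scope.
Local Open Scope ring_scope.

Definition inner {R : realType} {n : nat} (x t : 'rV[R]_n) : R :=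
  \sum_(i < n) x 0 i * t 0 i.

Definition enorm {R : realType} {n : nat} (x : 'rV[R]_n) : R :=
  Num.sqrt (\sum_(i < n) x 0 i ^+ 2).

Definition eball {R : realType} {n : nat} (nu : 'rV[R]_n) (eps : R) : set 'rV[R]_n :=
  [set t | enorm (t - nu) <= eps].

Definition vcons {R : realType} {m : nat} (x : R) (v : 'rV[R]_m) : 'rV[R]_m.+1 :=
  \row_(i < m.+1) (if unlift ord0 i is Some j then v 0 j else x).

(* Expectation E[f(x)] for x ~ N(0, I_n), as the iterated integral of f
   against n independent standard normal coordinates (product measure). *)
Fixpoint gauss_exp (R : realType) (n : nat) : ('rV[R]_n -> \bar R) -> \bar R :=
  match n return ('rV[R]_n -> \bar R) -> \bar R with
  | 0 => fun f => f 0
  | m.+1 => fun f =>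
      (\int[@normal_prob R 0 1]_(x in [set: R])
          @gauss_exp R m (fun v : 'rV[R]_m => f (vcons x v)))%E
  end.

Definition gauss_width {R : realType} {n : nat} (K : set 'rV[R]_n)
  (nu : 'rV[R]_n) (eps : R) : \bar R :=
  @gauss_exp R n (fun x : 'rV[R]_n => ereal_sup [set (inner x t)%:E | t in eball nu eps `&` K]).

(* Main.v *)
Require Import Defs.
From HB Require Import structures.
From mathcomp Require Import all_boot all_order all_algebra.
From mathcomp Require Import all_classical all_reals all_analysis.
From mathcomp Require Import ring lra.
From mathcomp Require Import measurable_realfun.
Import Order.TTheory GRing.Theory Num.Theory.
Import numFieldNormedType.Exports.
Local Open Scope classical_set_scope.
Local Open Scope ring_scope.
Section GB.
Variable R : realType.
Definition Cst : R := (2 * normal_peak 1 / normal_peak (Num.sqrt 2))%R.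

Lemma gauss_bound (x : R) :
  ((`|x| + 1) * normal_pdf 0 1 x <= Cst * normal_pdf 0 (Num.sqrt 2) x)%R.
Proof.
have s2 : Num.sqrt (2:R) != 0 by rewrite sqrtr_eq0 -ltNge.
rewrite /normal_pdf oner_eq0 (negbTE s2) /normal_fun !subr0 expr1n sqr_sqrtr //.
set a : R := (x ^+ 2 / 4)%R.
have e1 : (- x ^+ 2 / (1 *+ 2) = - a + - a)%R by rewrite /a; field.
have e2 : (- x ^+ 2 / (2 *+ 2) = - a)%R by rewrite /a; field.
rewrite e1 e2 expRD.
have p1 : (0 < normal_peak (1:R))%R by apply: normal_peak_gt0; rewrite oner_eq0.
have p2 : (0 < normal_peak (Num.sqrt (2:R)))%R by apply: normal_peak_gt0.
have E0 : (0 < expR (- a))%R by apply: expR_gt0.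
have Ea : (expR (- a) * expR a = 1)%R by rewrite -expRD addNr expR0.
have Ha : (1 + a <= expR a)%R by apply: expR_ge1Dx.
have Hx : (`|x| + 1 <= 2 + 2 * a)%R.
  rewrite /a -(real_normK (num_real x)); have := normr_ge0 x.
  set t := `|x|; move=> t0; nra.
rewrite /Cst.
have -> : (2 * normal_peak 1 / normal_peak (Num.sqrt 2) * (normal_peak (Num.sqrt 2) * expR (- a))
  = 2 * normal_peak 1 * expR (- a))%R by field; rewrite gt_eqF.
have : ((`|x| + 1) * expR (- a) <= 2)%R.
  rewrite -Ea; nra.
move=> h; have pE := mulr_gt0 p1 E0.
have -> : ((`|x| + 1) * (normal_peak 1 * (expR (- a) * expR (- a))) =
  (normal_peak 1 * expR (- a)) * ((`|x| + 1) * expR (- a)))%R by ring.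
have -> : (2 * normal_peak 1 * expR (- a) = (normal_peak 1 * expR (- a)) * 2)%R by ring.
by rewrite ler_pM2l.
Qed.

End GB.

Section FM.
Variable R : realType.
Local Open Scope ereal_scope.

Definition Ak (k : nat) : set R := [set x | (k%:R <= `|x|)%R].

Lemma mAk k : measurable (Ak k).
Proof.
have -> : Ak k = setT `&` (@Num.norm _ R) @^-1` `[k%:R, +oo[%classic.
  apply/seteqP; split => x /=; rewrite in_itv /= andbT //.
  by move=> [_].
by apply: measurable_realfun.normr_measurable => //; exact: measurable_itv.
Qed.

Lemma psum_le (y : R) N :
  (\sum_(0 <= k < N) (\1_(Ak k) y : R) <= N%:R /\ \sum_(0 <= k < N) (\1_(Ak k) y : R) <= `|y| + 1)%R.
Proof.
elim: N => [|N [IH1 IH2]]; first by rewrite big_geq // ler_wpDl.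
rewrite big_nat_recr //= indicE.
case: (boolP (y \in Ak N)) => [/set_mem /= hy|hn]; rewrite /= ?addr0.
  split; [rewrite -(natr1 N); exact: lerD IH1 (lexx _) | exact: lerD (le_trans IH1 hy) (lexx _)].
by split => //; rewrite (le_trans IH1) // ler_nat.
Qed.

Lemma psum_eq (y : R) N : (N%:R <= `|y| + 1)%R ->
  (\sum_(0 <= k < N) (\1_(Ak k) y : R) = N%:R)%R.
Proof.
elim: N => [|N IH] hN; first by rewrite big_geq.
rewrite big_nat_recr //= IH; last by rewrite (le_trans _ hN) // ler_nat.
rewrite indicE mem_set ?natr1 //=.
by move: hN; rewrite -(natr1 N) lerD2r.
Qed.

Lemma ser_ge (y : R) : `|y|%:E <= \sum_(k <oo) (\1_(Ak k) y : R)%:E.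
Proof.
apply: le_trans (nneseries_lim_ge (Num.trunc `|y|).+1 _); last by move=> n _ _; rewrite lee_fin indicE ler0n.
rewrite sumEFin lee_fin psum_eq.
  by have /andP[_ /ltW] := truncn_itv (normr_ge0 y).
by rewrite -natr1 lerD2r; have /andP[] := truncn_itv (normr_ge0 y).
Qed.

Lemma ser_le (y : R) : \sum_(k <oo) (\1_(Ak k) y : R)%:E <= (`|y| + 1)%:E.
Proof.
apply: lime_le; first by apply: is_cvg_nneseries => n _ _; rewrite lee_fin indicE ler0n.
near=> N; rewrite sumEFin lee_fin; exact: (psum_le y N).2.
Unshelve. all: by end_near.
Qed.

Lemma first_moment :
  \int[@normal_prob R 0%R 1%R]_(x in [set: R]) (`|x|%:E) < +oo.
Proof.
have mk k : measurable_fun [set: R] (EFin \o (\1_(Ak k) : R -> R)).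
  by apply/measurable_EFinP; apply: measurable_indic; exact: mAk.
apply: (@le_lt_trans _ _ (\int[@normal_prob R 0%R 1%R]_(x in [set: R]) \sum_(k <oo) (\1_(Ak k) x : R)%:E)).
  apply: ge0_le_integral => //.
- have := (measurable_EFinP [set: R] (@Num.norm _ R)).2 (@measurable_realfun.normr_measurable R setT).
  exact.
- have h0 : forall k (x : R), setT x -> xpredT k -> (0 <= (\1_(Ak k) x : R)%:E).
    by move=> k x _ _; rewrite lee_fin indicE ler0n.
  have := @ge0_emeasurable_sum _ R R setT (fun k (x : R) => (\1_(Ak k) x : R)%:E) xpredT h0 (fun k _ => mk k).
  exact.
- by move=> x _; exact: ser_ge.
rewrite integral_nneseries //; try (by move=> n; exact: mk); try (by move=> n x _; rewrite lee_fin indicE ler0n).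
rewrite (eq_eseriesr (fun n _ => integral_indic (@normal_prob R 0%R 1%R) measurableT (mAk n))).
under eq_eseriesr do rewrite setIT.
set pdf := normal_pdf (0:R) 1.
have hAk k : normal_prob 0 1 (Ak k) =
    \int[lebesgue_measure]_x ((\1_(Ak k) x : R) * pdf x)%:E.
  rewrite /normal_prob integral_mkcond; apply: eq_integral => x _.
  by rewrite patchE indicE; case: (x \in Ak k); rewrite /= ?mul1r ?mul0r.
have mk2 k : measurable_fun [set: R] (fun x => ((\1_(Ak k) x : R) * pdf x)%:E).
  apply/measurable_EFinP; apply: measurable_funM.
    by apply: measurable_indic; exact: mAk.
  exact: measurable_normal_pdf.
apply: le_lt_trans (_ : _ <= (Cst R)%:E) (ltry _).
apply: lime_le.
  by apply: is_cvg_nneseries => n _ _; exact: measure_ge0.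
near=> N.
rewrite (eq_bigr (fun k => \int[lebesgue_measure]_x ((\1_(Ak k) x : R) * pdf x)%:E)); last by move=> k _; exact: hAk.
rewrite -ge0_integral_sum //; try (by move=> k; exact: mk2);
  try (by move=> k x _; rewrite lee_fin mulr_ge0 // ?indicE ?ler0n //; exact: normal_pdf_ge0).
apply: (@le_trans _ _ (\int[lebesgue_measure]_x (Cst R * normal_pdf 0 (Num.sqrt 2) x)%:E)).
  apply: ge0_le_integral => //.
  - move=> x _; rewrite sumEFin lee_fin; apply: sumr_ge0 => k _.
    rewrite mulr_ge0 // ?indicE ?ler0n //; exact: normal_pdf_ge0.
  - have := @emeasurable_sum _ R R setT nat (index_iota 0 N) _ mk2. exact.
  - apply/measurable_EFinP; apply: measurable_funM; first exact: measurable_cst.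
    exact: measurable_normal_pdf.
  - move=> x _; rewrite sumEFin lee_fin -mulr_suml.
    apply: le_trans (@gauss_bound R x); apply: ler_wpM2r; first exact: normal_pdf_ge0.
    exact: (psum_le x N).2.
under eq_integral do rewrite EFinM.
rewrite integralZl //; last exact: integrable_normal_pdf.
by rewrite integral_normal_pdf mule1.
Unshelve. all: by end_near.
Qed.

End FM.

Lemma lip_cont (R : realType) (g : R -> R) L :
  (forall x y, `|g x - g y| <= L * `|x - y|) -> continuous g.
Proof.
move=> h x; apply/cvgrPdist_lt => e e0.
have L1 : 0 < `|L| + 1 by rewrite ltr_wpDl.
exists (e / (`|L| + 1)) => /=; first by rewrite divr_gt0.
move=> z hz; apply: (le_lt_trans (h x z)).
move: hz; rewrite /ball_ /= ltr_pdivlMr // => hz.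
have := ler_norm L; have := normr_ge0 (x - z); nra.
Qed.

Lemma intP_cst (R : realType) (c : R) :
  (\int[@normal_prob R 0 1]_x (c%:E) = c%:E)%E.
Proof.
rewrite integral_cst //.
apply: (@eq_trans _ _ (c%:E * 1)%E); last by rewrite mule1.
congr (_ * _)%E; exact: integral_normal_pdf.
Qed.

Lemma lip_integrable (R : realType) (g : R -> R) L :
  (forall x y, `|g x - g y| <= L * `|x - y|) ->
  (@normal_prob R 0 1).-integrable setT (EFin \o g).
Proof.
move=> h.
have mg : measurable_fun [set: R] g := continuous_measurable_fun (@lip_cont R g L h).
have mn : measurable_fun [set: R] (@Num.norm _ R) := @measurable_realfun.normr_measurable R setT.
have mng : measurable_fun [set: R] (fun x => `|g x|%:E).
  exact: (measurable_EFinP [set: R] (fun x => `|g x|)).2 (measurableT_comp mn mg).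
have mnx : measurable_fun [set: R] (fun x : R => `|x|%:E).
  exact: (measurable_EFinP [set: R] (fun x : R => `|x|)).2 mn.
have mc : measurable_fun [set: R] (fun x : R => `|g 0|%:E) by exact: measurable_cst.
have mLx : measurable_fun [set: R] (fun x : R => (`|L| * `|x|)%:E).
  apply: (measurable_EFinP [set: R] (fun x : R => `|L| * `|x|)).2.
  by apply: measurable_funM => //; exact: measurable_cst.
apply/integrableP; split.
  have := (measurable_EFinP [set: R] g).2 mg. exact.

apply: (@le_lt_trans _ _ (\int[normal_prob 0 1]_x ((`|g 0| + `|L| * `|x|)%:E)))%E.
  apply: ge0_le_integral => //.
  - have hb : measurable_fun [set: R] (fun x : R => `|g 0| + `|L| * `|x|).
      by apply: measurable_funD => //; apply: measurable_funM => //.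
    have := (measurable_EFinP [set: R] _).2 hb. exact.
  - move=> x _ /=; rewrite lee_fin.
    have := h x 0; rewrite subr0 => hx.
    have t := ler_normD (g x - g 0) (g 0); rewrite subrK in t.
    have t2 : L * `|x| <= `|L| * `|x| by apply: ler_wpM2r => //; exact: ler_norm.
    apply: (le_trans t); rewrite addrC lerD2l; exact: le_trans hx t2.
under eq_integral do rewrite EFinD.
rewrite ge0_integralD //; try (by move=> x _; rewrite lee_fin ?mulr_ge0);
  try (by have := mc; exact); try (by have := mLx; exact).
rewrite intP_cst.
under eq_integral do rewrite EFinM.
rewrite ge0_integralZl_EFin //; try (by move=> x _; rewrite lee_fin);
  try (by have := mnx; exact).
rewrite lte_add_pinfty // ?ltry // lte_mul_pinfty // ?lee_fin //.
have := @first_moment R. exact.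
Qed.

Lemma lipR_comb (R : realType) (g1 g2 : R -> R) L1 L2 a b c :
  (forall x y, `|g1 x - g1 y| <= L1 * `|x - y|) ->
  (forall x y, `|g2 x - g2 y| <= L2 * `|x - y|) ->
  forall x y, `|(a * g1 x + b * g2 x + c) - (a * g1 y + b * g2 y + c)|
     <= (`|a| * L1 + `|b| * L2) * `|x - y|.
Proof.
move=> h1 h2 x y.
have -> : (a * g1 x + b * g2 x + c) - (a * g1 y + b * g2 y + c) =
  a * (g1 x - g1 y) + b * (g2 x - g2 y) by ring.
apply: le_trans (ler_normD _ _) _; rewrite !normrM mulrDl -!mulrA.
by apply: lerD; apply: ler_wpM2l.
Qed.

Section Main.
Variable R : realType.
Local Notation P := (@normal_prob R 0 1).

Definition d1 {n} (x y : 'rV[R]_n) : R := \sum_(i < n) `|x 0 i - y 0 i|.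
Definition Lip {n} (L : R) (f : 'rV[R]_n -> R) := forall x y, `|f x - f y| <= L * d1 x y.
Definition GE {n} (f : 'rV[R]_n -> R) : \bar R := @gauss_exp R n (fun x => (f x)%:E).

Lemma d1_vcons n a b (v w : 'rV[R]_n) : d1 (vcons a v) (vcons b w) = `|a - b| + d1 v w.
Proof.
rewrite /d1 big_ord_recl /vcons !mxE unlift_none; congr (_ + _).
by apply: eq_bigr => i _; rewrite !mxE liftK.
Qed.

Lemma d1xx n (v : 'rV[R]_n) : d1 v v = 0.
Proof. by rewrite /d1 big1 // => i _; rewrite subrr normr0. Qed.

Lemma main_ind n :
  (forall L (f : 'rV[R]_n -> R), Lip L f -> GE f \is a fin_num) /\
  (forall L1 L2 L3 (f1 f2 h : 'rV[R]_n -> R) a b c, Lip L1 f1 -> Lip L2 f2 -> Lip L3 h ->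
     0 <= a -> 0 <= b -> (forall x, a * f1 x + b * f2 x + c <= h x) ->
     (a%:E * GE f1 + b%:E * GE f2 + c%:E <= GE h)%E).
Proof.
elim: n => [|n [IHf IHk]].
  split => [L f _ | L1 L2 L3 f1 f2 h a b c _ _ _ _ _ H]; first by [].
  by rewrite /GE /= -!EFinM -!EFinD lee_fin.
pose F (f : 'rV[R]_n.+1 -> R) (x : R) := fine (GE (fun v => f (vcons x v))).
have Lv : forall L f x, Lip L f -> Lip L (fun v : 'rV[R]_n => f (vcons x v)).
  move=> L f x hf v w; have := hf (vcons x v) (vcons x w).
  by rewrite d1_vcons subrr normr0 add0r.
have FE : forall L f x, Lip L f -> GE (fun v => f (vcons x v)) = (F f x)%:E.
  by move=> L f x hf; rewrite /F fineK //; exact: IHf _ _ (Lv _ _ _ hf).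
have GES : forall L f, Lip L f -> GE f = (\int[P]_x (F f x)%:E)%E.
  move=> L f hf; rewrite /GE /=; apply: eq_integral => x _; exact: FE L f x hf.
have FL : forall L f, Lip L f -> forall x y, `|F f x - F f y| <= L * `|x - y|.
  move=> L f hf.
  have one : forall x y, F f y - L * `|x - y| <= F f x.
    move=> x y.
    have := IHk L L L (fun v => f (vcons y v)) (fun v => f (vcons y v)) (fun v => f (vcons x v))
      1 0 (- (L * `|x - y|)) (Lv _ _ _ hf) (Lv _ _ _ hf) (Lv _ _ _ hf) ler01 (lexx 0).
    rewrite (FE L f y hf) (FE L f x hf) mul0e adde0 mul1e -EFinD lee_fin; apply.
    move=> v; rewrite mul1r mul0r addr0.
    have := hf (vcons y v) (vcons x v); rewrite d1_vcons d1xx addr0 (distrC y x).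
    move=> /(le_trans (ler_norm _)) H1; lra.
  move=> x y; rewrite ler_norml; have := one x y; have := one y x; rewrite distrC; lra.
have Fint : forall L f, Lip L f -> P.-integrable setT (EFin \o F f).
  by move=> L f hf; exact: (@lip_integrable R _ _ (FL L f hf)).
split.
  move=> L f hf; rewrite (GES L f hf); apply: integrable_fin_num => //; exact: Fint L f hf.
move=> L1 L2 L3 f1 f2 h a b c h1 h2 h3 a0 b0 H.
rewrite (GES _ _ h1) (GES _ _ h2) (GES _ _ h3).
have pt : forall x, a * F f1 x + b * F f2 x + c <= F h x.
  move=> x; have := IHk _ _ _ _ _ _ a b c (Lv _ _ x h1) (Lv _ _ x h2) (Lv _ _ x h3) a0 b0
    (fun v => H (vcons x v)).
  by rewrite (FE _ _ x h1) (FE _ _ x h2) (FE _ _ x h3) -!EFinM -!EFinD lee_fin.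
set G := fun x => a * F f1 x + b * F f2 x + c.
have i1 := Fint _ _ h1; have i2 := Fint _ _ h2; have i3 := Fint _ _ h3.
have iG : P.-integrable setT (EFin \o G) :=
  @lip_integrable R _ _ (@lipR_comb R _ _ _ _ a b c (FL _ _ h1) (FL _ _ h2)).
apply: (@le_trans _ _ (\int[P]_x (G x)%:E)%E); last first.
  apply: le_integral => // x _; rewrite lee_fin; exact: pt.
have iZ1 : P.-integrable setT (fun x => a%:E * (F f1 x)%:E)%E by exact: integrableZl.
have iZ2 : P.-integrable setT (fun x => b%:E * (F f2 x)%:E)%E by exact: integrableZl.
have iC : P.-integrable setT (fun x : R => c%:E).
  by apply: (@lip_integrable R (fun=> c) 0) => x y; rewrite subrr normr0 mul0r.
have iZ12 : P.-integrable setT (fun x => a%:E * (F f1 x)%:E + b%:E * (F f2 x)%:E)%E.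
  exact: integrableD.
rewrite [X in (_ <= X)%E](@eq_integral _ _ _ P setT (fun x => a%:E * (F f1 x)%:E + b%:E * (F f2 x)%:E + c%:E)%E); last by move=> x _; rewrite /G -!EFinM -!EFinD.
rewrite integralD //. rewrite integralD //. rewrite !integralZl //. rewrite intP_cst.
by [].
Qed.

End Main.

Section Geom.
Variable R : realType.
Variable n : nat.
Implicit Types (v t x y : 'rV[R]_n).

Lemma sumsq_ge0 v : 0 <= \sum_(i < n) v 0 i ^+ 2.
Proof. by apply: sumr_ge0 => i _; exact: sqr_ge0. Qed.

Lemma enorm_le v e : 0 <= e -> (enorm v <= e) = (\sum_(i < n) v 0 i ^+ 2 <= e ^+ 2).
Proof.
move=> e0; rewrite /enorm -{1}(ger0_norm e0) -sqrtr_sqr ler_sqrt //; exact: sqr_ge0.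
Qed.

Lemma coord_le v i : `|v 0 i| <= enorm v.
Proof.
rewrite /enorm -sqrtr_sqr ler_sqrt ?sumsq_ge0 // (bigD1 i) //= ler_wpDr //.
by apply: sumr_ge0 => j _; exact: sqr_ge0.
Qed.

Lemma enorm_conv (a b : 'rV[R]_n) (l e : R) : 0 <= l -> l <= 1 -> 0 <= e ->
  enorm a <= e -> enorm b <= e -> enorm (l *: a + (1 - l) *: b) <= e.
Proof.
move=> l0 l1 e0; rewrite !enorm_le // => ha hb.
apply: (@le_trans _ _ (\sum_(i < n) (l * a 0 i ^+ 2 + (1 - l) * b 0 i ^+ 2))).
  apply: ler_sum => i _; rewrite !mxE.
  have : 0 <= l * (1 - l) * (a 0 i - b 0 i) ^+ 2.
    by rewrite mulr_ge0 ?sqr_ge0 // mulr_ge0 // subr_ge0.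
  move=> h; nra.
rewrite big_split /= -!mulr_sumr.
have h1 := ler_wpM2l l0 ha.
have h2 : (1 - l) * \sum_(i < n) b 0 i ^+ 2 <= (1 - l) * e ^+ 2 by apply: ler_wpM2l; rewrite // subr_ge0.
lra.
Qed.

Lemma inner_conv x t1 t2 (l : R) :
  inner x (l *: t1 + (1 - l) *: t2) = l * inner x t1 + (1 - l) * inner x t2.
Proof.
rewrite /inner !mulr_sumr -big_split; apply: eq_bigr => i _; rewrite !mxE /=; ring.
Qed.

Definition d1' x y : R := \sum_(i < n) `|x 0 i - y 0 i|.

Lemma inner_lip x y t (M : R) : (forall i, `|t 0 i| <= M) ->
  inner x t <= inner y t + M * d1' x y.
Proof.
move=> hM; rewrite -lerBlDl /inner -sumrB mulr_sumr; apply: ler_sum => i _.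
rewrite -mulrBl; apply: le_trans (ler_norm _) _; rewrite normrM mulrC.
by apply: ler_wpM2r => //.
Qed.

Lemma d1'C x y : d1' x y = d1' y x.
Proof. by apply: eq_bigr => i _; rewrite distrC. Qed.

End Geom.

Section Final.
Variable R : realType.
Variable n : nat.
Variable K : set 'rV[R]_n.
Variable eps : R.
Hypothesis eps0 : 0 <= eps.

Definition Sset (nu : 'rV[R]_n) := eball nu eps `&` K.
Definition sg nu (x : 'rV[R]_n) : R := sup [set inner x t | t in Sset nu].
Definition Mb (nu : 'rV[R]_n) : R := enorm nu + eps.

Lemma enorm0 : enorm (0 : 'rV[R]_n) = 0.
Proof. by rewrite /enorm big1 ?sqrtr0 // => i _; rewrite mxE expr2 mul0r. Qed.

Lemma inner0 t : inner (0 : 'rV[R]_n) t = 0.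
Proof. by rewrite /inner big1 // => i _; rewrite mxE mul0r. Qed.

Lemma S_bound nu t i : Sset nu t -> `|t 0 i| <= Mb nu.
Proof.
move=> [hb _]; have := @coord_le R n (t - nu) i; rewrite !mxE => h1.
have h2 := @coord_le R n nu i.
apply: (@le_trans _ _ (`|t 0 i - nu 0 i| + `|nu 0 i|)).
  by have := ler_normD (t 0 i - nu 0 i) (nu 0 i); rewrite subrK.
rewrite /Mb addrC; apply: lerD => //; exact: le_trans h1 hb.
Qed.

Lemma S_nu nu : K nu -> Sset nu nu.
Proof. by move=> Knu; split => //; rewrite /eball /= subrr enorm0. Qed.

Lemma hs nu x : K nu -> has_sup [set inner x t | t in Sset nu].
Proof.
move=> Knu; split; first by exists (inner x nu), nu => //; exact: S_nu.
exists (Mb nu * d1' R n x 0) => r [t St <-].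
have := @inner_lip R n x 0 t _ (fun i => S_bound _ _ i St); rewrite inner0 add0r; exact.
Qed.

Lemma sg_E nu x : K nu -> ereal_sup [set (inner x t)%:E | t in Sset nu] = (sg nu x)%:E.
Proof. by move=> Knu; have [ne ub] := hs nu x Knu; rewrite -ereal_sup_EFin // image_comp. Qed.

Lemma sg_lip nu : K nu -> @Lip R n (Mb nu) (sg nu).
Proof.
move=> Knu.
have one x y : sg nu x <= sg nu y + Mb nu * d1' R n x y.
  apply: ge_sup (hs nu x Knu).1 _ => r [t St <-].
  apply: le_trans (@inner_lip R n x y t _ (fun i => S_bound _ _ i St)) _; rewrite lerD2r.
  by have := ub_le_sup (hs nu y Knu).2; apply; exists t.
move=> x y; rewrite ler_norml; have := one x y; have := one y x; rewrite (@d1'C R n y x).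
rewrite /d1' => h1 h2; rewrite /d1; apply/andP; split; lra.
Qed.

Lemma gw_E nu : K nu -> gauss_width K nu eps = @GE R n (sg nu).
Proof.
move=> Knu; rewrite /gauss_width /GE; congr (@gauss_exp R n _); apply/funext => x.
exact: sg_E.
Qed.

Lemma pointwise nu1 nu2 (l : R) : K nu1 -> K nu2 -> convex_set K -> 0 <= l -> l <= 1 ->
  forall x, l * sg nu1 x + (1 - l) * sg nu2 x + 0 <= sg (l *: nu1 + (1 - l) *: nu2) x.
Proof.
move=> K1 K2 hK l0 l1 x; rewrite addr0.
have Kn : K (l *: nu1 + (1 - l) *: nu2).
  have := hK nu1 nu2 (Itv01 l0 l1) (mem_set K1) (mem_set K2). move/set_mem. exact.
apply/ler_addgt0Pr => e e0.
have [r1 [t1 S1 <-] h1] := sup_adherent e0 (hs nu1 x K1).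
have [r2 [t2 S2 <-] h2] := sup_adherent e0 (hs nu2 x K2).
have St : Sset (l *: nu1 + (1 - l) *: nu2) (l *: t1 + (1 - l) *: t2).
  case: S1 => b1 k1; case: S2 => b2 k2; split.
    rewrite /eball /=.
    have -> : l *: t1 + (1 - l) *: t2 - (l *: nu1 + (1 - l) *: nu2) =
        l *: (t1 - nu1) + (1 - l) *: (t2 - nu2).
      by apply/rowP => i; rewrite !mxE /=; ring.
    exact: enorm_conv.
  have := hK t1 t2 (Itv01 l0 l1) (mem_set k1) (mem_set k2). move/set_mem. exact.
have hle : inner x (l *: t1 + (1 - l) *: t2) <= sg (l *: nu1 + (1 - l) *: nu2) x.
  by have := ub_le_sup (hs _ x Kn).2; apply; exists (l *: t1 + (1 - l) *: t2).
rewrite inner_conv in hle.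
have a1 : l * (sg nu1 x - e) <= l * inner x t1 by apply: ler_wpM2l => //; exact: ltW.
have a2 : (1 - l) * (sg nu2 x - e) <= (1 - l) * inner x t2.
  by apply: ler_wpM2l; rewrite ?subr_ge0 // ltW.
lra.
Qed.

End Final.

Theorem mainTheorem11 (R : realType) (n : nat) (K : set 'rV[R]_n) :
  closed K -> convex_set K ->
  forall eps : R, 0 <= eps ->
  forall nu1 nu2 : 'rV[R]_n, K nu1 -> K nu2 ->
  forall l : R, 0 <= l <= 1 ->
  (l%:E * gauss_width K nu1 eps + (1 - l)%:E * gauss_width K nu2 eps
     <= gauss_width K (l *: nu1 + (1 - l) *: nu2) eps)%E.
Proof.
move=> _ hK eps eps0 nu1 nu2 K1 K2 l /andP[l0 l1].
have Kn : K (l *: nu1 + (1 - l) *: nu2).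
  have := hK nu1 nu2 (Itv01 l0 l1) (mem_set K1) (mem_set K2). move/set_mem. exact.
rewrite (@gw_E R n K eps eps0 _ K1) (@gw_E R n K eps eps0 _ K2) (@gw_E R n K eps eps0 _ Kn).
have := (main_ind R n).2 _ _ _ _ _ _ l (1 - l) 0 (@sg_lip R n K eps eps0 _ K1) (@sg_lip R n K eps eps0 _ K2)
  (@sg_lip R n K eps eps0 _ Kn) l0 _ (@pointwise R n K eps eps0 _ _ l K1 K2 hK l0 l1).
rewrite adde0; apply; by rewrite subr_ge0.
Qed.
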